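(* Let $f\in\mathbb{R}[x,y]$ be a polynomial of degree $n\ge 3$ and let $p$ be a point of the equator $\{\omega=0\}$ of $\mathbb{S}^2$. Then $p$ is a flat point of the quadratic form $Q$ if and only if $p$ is a singular point at infinity of $\mathbb{Y}_k$, $k=1,2$. Moreover, if $p=(u_0,v_0,0)$ is a singular point at infinity of $\mathbb{Y}_k$ and $f_n$ has no repeated factors, then $H_f(u_0,v_0,0)<0$.
   Context: Write $f=\sum_{i=0}^n f_i$ with $f_i$ homogeneous of degree $i$, $F(u,v,\omega)=\sum_{i=0}^n\omega^{n-i}f_i(u,v)$, $A=-uF_{uu}-vF_{uv}$, $B=-uF_{uv}-vF_{vv}$, $S=u^2F_{uu}+2uvF_{uv}+v^2F_{vv}$, and let $Q=\omega^2F_{uu}du^2+2\omega^2F_{uv}du\,dv+\omega^2F_{vv}dv^2+2\omega A\,du\,d\omega+2\omega B\,dv\,d\omega+S\,d\omega^2$, restricted to the unit sphere $\mathbb{S}^2\subset\mathbb{R}^3=\{(u,v,\omega)\}$; on each open hemisphere it is a nonvanishing multiple of the form induced from $\mathrm{II}_f=f_{xx}dx^2+2f_{xy}dxdy+f_{yy}dy^2$ via $(u,v,\omega)\mapsto(u/\omega,v/\omega)$. $\mathbb{Y}_1,\mathbb{Y}_2$ are the two fields of lines on $\mathbb{S}^2$ given by the solutions $\xi\in T_p\mathbb{S}^2$ of $Q_p(\xi,\xi)=0$. A flat point of $Q$ is a point where all coefficients $\omega^2F_{uu},\omega^2F_{uv},\omega^2F_{vv},\omega A,\omega B,S$ vanish.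 A singular point of $\mathbb{Y}_k$ is a point $p$ at which the restriction of $Q_p$ to $T_p\mathbb{S}^2$ vanishes identically (so the line fields are not determined there); a singular point at infinity is a singular point lying on the equator. $H_f$ is the homogenization $z^{2n-4}\mathrm{Hess}\,f(x/z,y/z)$ of $\mathrm{Hess}\,f=f_{xx}f_{yy}-f_{xy}^2$, so $H_f(x,y,0)=\mathrm{Hess}\,f_n(x,y)$. *)

(* Defs.v *)
From HB Require Import structures.
From mathcomp Require Import all_boot all_order all_algebra.
From mathcomp Require Import mpoly.
Set Implicit Arguments. Unset Strict Implicit. Unset Printing Implicit Defensive.
Import Order.TTheory GRing.Theory Num.Theory.
Local Open Scope ring_scope.

Section Defs.
Variable R : rcfType.

Definition ix : 'I_2 := @Ordinal 2 0 isT.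
Definition iy : 'I_2 := @Ordinal 2 1 isT.
Definition iu : 'I_3 := @Ordinal 3 0 isT.
Definition iv : 'I_3 := @Ordinal 3 1 isT.
Definition iw : 'I_3 := @Ordinal 3 2 isT.

(* total degree of f (msize = 1 + total degree, 0 for the zero polynomial) *)
Definition tdeg (f : {mpoly R[2]}) : nat := (msize f).-1.

Definition hpart (i : nat) (f : {mpoly R[2]}) : {mpoly R[2]} :=
  \sum_(m <- msupp f | mdeg m == i) f@_m *: 'X_[m].

(* homogenization with respect to degree d : z^d g(x/z, y/z), variables (x,y,z) *)
Definition homogenize (d : nat) (g : {mpoly R[2]}) : {mpoly R[3]} :=
  \sum_(m <- msupp g)
     g@_m *: ('X_iu ^+ m ix * 'X_iv ^+ m iy * 'X_iw ^+ (d - mdeg m)).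

(* F(u,v,w) = sum_i w^(n-i) f_i(u,v),  n = deg f *)
Definition bigF (f : {mpoly R[2]}) : {mpoly R[3]} := homogenize (tdeg f) f.

Definition ev3 (P : {mpoly R[3]}) (u v w : R) : R :=
  P.@[fun i : 'I_3 => nth 0 [:: u; v; w] i].

Definition Fuu f := mderiv iu (mderiv iu (bigF f)).
Definition Fuv f := mderiv iu (mderiv iv (bigF f)).
Definition Fvv f := mderiv iv (mderiv iv (bigF f)).

Definition polA f : {mpoly R[3]} := - ('X_iu * Fuu f) - 'X_iv * Fuv f.
Definition polB f : {mpoly R[3]} := - ('X_iu * Fuv f) - 'X_iv * Fvv f.
Definition polS f : {mpoly R[3]} :=
  'X_iu ^+ 2 * Fuu f + 2%:R *: ('X_iu * 'X_iv * Fuv f) + 'X_iv ^+ 2 * Fvv f.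

Definition Q_uu f u v w := w ^+ 2 * ev3 (Fuu f) u v w.
Definition Q_uv f u v w := w ^+ 2 * ev3 (Fuv f) u v w.
Definition Q_vv f u v w := w ^+ 2 * ev3 (Fvv f) u v w.
Definition Q_uw f u v w := w * ev3 (polA f) u v w.
Definition Q_vw f u v w := w * ev3 (polB f) u v w.
Definition Q_ww f u v w := ev3 (polS f) u v w.

Definition Qform f u v w (a b c : R) : R :=
  Q_uu f u v w * a ^+ 2 + 2%:R * Q_uv f u v w * a * b + Q_vv f u v w * b ^+ 2
  + 2%:R * Q_uw f u v w * a * c + 2%:R * Q_vw f u v w * b * c
  + Q_ww f u v w * c ^+ 2.

Definition on_sphere (u v w : R) : Prop := u ^+ 2 + v ^+ 2 + w ^+ 2 = 1.

Definition flat_pt f u v w : Prop :=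
  Q_uu f u v w = 0 /\ Q_uv f u v w = 0 /\ Q_vv f u v w = 0 /\
  Q_uw f u v w = 0 /\ Q_vw f u v w = 0 /\ Q_ww f u v w = 0.

(* singular point of the line fields Y_1, Y_2: Q_p restricted to T_p S^2
   vanishes identically *)
Definition singular_pt f u v w : Prop :=
  on_sphere u v w /\
  forall a b c : R, a * u + b * v + c * w = 0 -> Qform f u v w a b c = 0.

Definition singular_at_infinity f u v w : Prop :=
  singular_pt f u v w /\ w = 0.

Definition hessian (f : {mpoly R[2]}) : {mpoly R[2]} :=
  mderiv ix (mderiv ix f) * mderiv iy (mderiv iy f)
  - (mderiv ix (mderiv iy f)) ^+ 2.

Definition Hf (f : {mpoly R[2]}) : {mpoly R[3]} :=
  homogenize (2 * tdeg f - 4)%N (hessian f).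

Definition no_repeated_factors (g : {mpoly R[2]}) : Prop :=
  forall a b : {mpoly R[2]}, g = a * a * b -> (msize a <= 1)%N.

End Defs.

(* Main.v *)
Require Import Defs.
From HB Require Import structures.
From mathcomp Require Import all_boot all_order all_algebra.
From mathcomp Require Import mpoly.
From mathcomp Require Import ring lra zify.
Set Implicit Arguments. Unset Strict Implicit. Unset Printing Implicit Defensive.
Import Order.TTheory GRing.Theory Num.Theory.
Local Open Scope ring_scope.

Section Cong.
Variable T : comRingType.
Variable l : T.
Definition cg (p q : T) := exists W, p = q + l ^+ 2 * W.

Lemma cg_refl p : cg p p.
Proof. by exists 0; rewrite mulr0 addr0. Qed.

Lemma cgD p p' q q' : cg p p' -> cg q q' -> cg (p + q) (p' + q').
Proof. by move=> [W1 ->] [W2 ->]; exists (W1 + W2); ring. Qed.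

Lemma cgM p p' q q' : cg p p' -> cg q q' -> cg (p * q) (p' * q').
Proof.
by move=> [W1 ->] [W2 ->]; exists (p' * W2 + q' * W1 + l ^+ 2 * W1 * W2); ring.
Qed.

Lemma cg_trans p q r : cg p q -> cg q r -> cg p r.
Proof. by move=> [W1 ->] [W2 ->]; exists (W1 + W2); ring. Qed.

Lemma cg_eq p q : p = q -> cg p q.
Proof. by move=> ->; apply: cg_refl. Qed.

Lemma cg_sum (I : Type) (s : seq I) (F G : I -> T) :
  (forall i, cg (F i) (G i)) -> cg (\sum_(i <- s) F i) (\sum_(i <- s) G i).
Proof.
move=> H; elim: s => [|i s IH]; first by rewrite !big_nil; apply: cg_refl.
by rewrite !big_cons; apply: cgD.
Qed.

Lemma cg_sum_cond (I : Type) (s : seq I) (P : pred I) (F G : I -> T) :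
  (forall i, P i -> cg (F i) (G i)) ->
  cg (\sum_(i <- s | P i) F i) (\sum_(i <- s | P i) G i).
Proof.
move=> H; elim: s => [|i s IH]; first by rewrite !big_nil; apply: cg_refl.
rewrite !big_cons; case: ifP => Pi //; exact: cgD (H _ Pi) IH.
Qed.

Lemma cg_lin (A0 A1 B0 B1 : T) :
  cg ((A0 + A1 * l) * (B0 + B1 * l)) (A0 * B0 + (A0 * B1 + A1 * B0) * l).
Proof. by exists (A1 * B1); ring. Qed.

Lemma binomS (al be s : T) a :
  cg ((al * s + be * l) ^+ a.+1)
     (al ^+ a.+1 * s ^+ a.+1 + (a.+1)%:R * al ^+ a * be * s ^+ a * l).
Proof.
elim: a => [|a [W IH]].
  by apply: cg_eq; rewrite !expr1 !expr0; ring.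
exists ((a.+1)%:R * al ^+ a * be ^+ 2 * s ^+ a + (al * s + be * l) * W).
rewrite exprS IH.
rewrite (exprS al a.+1) (exprS s a.+1) (exprS al a) (exprS s a).
rewrite [(a.+2)%:R]mulrS [(a.+1)%:R]mulrS.
ring.
Qed.

Lemma binom (al be s : T) a :
  cg ((al * s + be * l) ^+ a)
     (al ^+ a * s ^+ a + a%:R * al ^+ a.-1 * be * s ^+ a.-1 * l).
Proof.
case: a => [|a]; last exact: binomS.
by apply: cg_eq; rewrite !expr0 mul0r mul0r mul0r mul0r addr0 mulr1.
Qed.

Lemma mono (u v s : T) a b : (0 < a + b)%N ->
  cg ((u * s + v * l) ^+ a * (v * s + (- u) * l) ^+ b)
     (u ^+ a * v ^+ b * s ^+ (a + b) +
      (a%:R * u ^+ a.-1 * v ^+ b.+1 - b%:R * u ^+ a.+1 * v ^+ b.-1) * s ^+ (a + b).-1 * l).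
Proof.
move=> ab.
apply: cg_trans; first apply: cgM; [exact: binom|exact: binom|].
apply: cg_trans; first exact: cg_lin.
apply: cg_eq.
rewrite exprD.
have E1 : a%:R * s ^+ a.-1 * s ^+ b = a%:R * s ^+ (a + b).-1 :> T.
  by case: a ab => [|a] _; rewrite ?mul0r // addSn /= exprD mulrA.
have E2 : b%:R * s ^+ a * s ^+ b.-1 = b%:R * s ^+ (a + b).-1 :> T.
  clear E1; case: b ab => [|b] _; rewrite ?mul0r // addnS /= exprD; ring.
transitivity (u ^+ a * v ^+ b * (s ^+ a * s ^+ b) +
  (u ^+ a.-1 * v ^+ b.+1 * (a%:R * s ^+ a.-1 * s ^+ b) -
   u ^+ a.+1 * v ^+ b.-1 * (b%:R * s ^+ a * s ^+ b.-1)) * l).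
  rewrite !exprS; ring.
rewrite E1 E2; ring.
Qed.

End Cong.

Section H.
Variable R : rcfType.
Implicit Types (f g h : {mpoly R[2]}) (P : {mpoly R[3]}).

Definition pt (u v : R) : 'I_2 -> R := fun i => nth 0 [:: u; v] i.
Definition ext (m : 'X_{1..2}) : 'X_{1..3} :=
  [multinom (nth 0%N [:: m ix; m iy; 0%N] i) | i < 3].
Definition cutl : 3.-tuple {mpoly R[2]} := [tuple 'X_ix; 'X_iy; 0].
Definition cut P : {mpoly R[2]} := P \mPo cutl.

Lemma sum_indic (T : eqType) (s : seq T) (F : T -> R) y : uniq s ->
  \sum_(x <- s) F x * (x == y)%:R = if y \in s then F y else 0.
Proof.
move=> us; case: ifP => ys.
  rewrite (bigD1_seq y) //= eqxx mulr1 big1 ?addr0 // => x /negbTE ->.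
  by rewrite mulr0.
rewrite big_seq big1 // => x xs; case: eqP => [e|]; last by rewrite mulr0.
by move: xs; rewrite e ys.
Qed.

Lemma ev3_cut P u v : ev3 P u v 0 = (cut P).@[pt u v].
Proof.
rewrite /cut /ev3 comp_mpoly_meval; apply: meval_eq => i.
case: i => [[|[|[|i]]] Hi] //=.
- by rewrite /cutl (tnth_nth 0) /= mevalXU.
- by rewrite /cutl (tnth_nth 0) /= mevalXU.
- by rewrite /cutl (tnth_nth 0) /= meval0.
Qed.

Definition proj (M : 'X_{1..3}) : 'X_{1..2} :=
  [multinom (nth 0%N [:: M iu; M iv] i) | i < 2].

Lemma X_cut M : 'X_[M] \mPo cutl = (M iw == 0%N)%:R *: 'X_[proj M].
Proof.
rewrite comp_mpolyX [in RHS]mpolyXE_id !big_ord_recr !big_ord0 /= !mul1r.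
rewrite /cutl !(tnth_nth 0) /= !mnmE /=.
have -> : widen_ord (leqnSn 2) (widen_ord (leqnSn 1) ord_max) = iu by apply: val_inj.
have -> : widen_ord (leqnSn 2) ord_max = iv by apply: val_inj.
have -> : (ord_max : 'I_3) = iw by apply: val_inj.
have -> : widen_ord (leqnSn 1) ord_max = ix by apply: val_inj.
have -> : (ord_max : 'I_2) = iy by apply: val_inj.
case: (M iw) => [|k]; first by rewrite expr0 mulr1 scale1r.
by rewrite expr0n /= mulr0 scale0r.
Qed.

Lemma ext_eq M m : (M == ext m) = (proj M == m) && (M iw == 0%N).
Proof.
apply/eqP/andP => [->|[/eqP <- /eqP h]].
  split; last by rewrite mnmE.
  apply/eqP/mnmP => -[[|[|i]] Hi]; rewrite !mnmE //=;
  by congr (m _); apply: val_inj.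
apply/mnmP => -[[|[|[|i]]] Hi]; rewrite !mnmE //=.
- by congr (M _); apply: val_inj.
- by congr (M _); apply: val_inj.
- by rewrite -[RHS]h; congr (M _); apply: val_inj.
Qed.

Lemma cutE P m : (cut P)@_m = P@_(ext m).
Proof.
rewrite /cut comp_mpolyEX raddf_sum /=.
rewrite (eq_bigr (fun M => P@_M * (M == ext m)%:R)); last first.
  move=> M _; rewrite mcoeffZ X_cut mcoeffZ mcoeffX ext_eq.
  by congr (_ * _); case: (M iw == 0%N); case: (proj M == m); rewrite /= ?mulr0 ?mulr1 ?mul0r ?mul1r.
rewrite sum_indic ?msupp_uniq //; case: ifP => // /negbT.
by rewrite mcoeff_msupp negbK => /eqP.
Qed.

Definition mn3 (a b c : nat) : 'X_{1..3} := [multinom (nth 0%N [:: a; b; c] i) | i < 3].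

Lemma mono3 a b c :
  'X_iu ^+ a * 'X_iv ^+ b * 'X_iw ^+ c = 'X_[mn3 a b c] :> {mpoly R[3]}.
Proof.
rewrite [RHS]mpolyXE_id !big_ord_recr big_ord0 /= mul1r !mnmE /=.
have -> : widen_ord (leqnSn 2) (widen_ord (leqnSn 1) ord_max) = iu by apply: val_inj.
have -> : widen_ord (leqnSn 2) ord_max = iv by apply: val_inj.
by have -> : (ord_max : 'I_3) = iw by apply: val_inj.
Qed.

Lemma ext_mn3 m : ext m = mn3 (m ix) (m iy) 0.
Proof. by []. Qed.

Lemma mn3_eq a b c a' b' c' : (mn3 a b c == mn3 a' b' c') = [&& a == a', b == b' & c == c'].
Proof.
apply/eqP/and3P => [e|[/eqP-> /eqP-> /eqP->]] //.
have := congr1 (fun M : 'X_{1..3} => M iu) e.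
have := congr1 (fun M : 'X_{1..3} => M iv) e.
have := congr1 (fun M : 'X_{1..3} => M iw) e.
by rewrite !mnmE /= => -> -> ->.
Qed.

Lemma mnm2_eq (m m' : 'X_{1..2}) : (m == m') = (m ix == m' ix) && (m iy == m' iy).
Proof.
apply/eqP/andP => [->|[/eqP e1 /eqP e2]] //.
apply/mnmP => -[[|[|i]] Hi] //.
- by have -> : Ordinal Hi = ix by apply: val_inj.
- by have -> : Ordinal Hi = iy by apply: val_inj.
Qed.

Lemma mdeg2 (m : 'X_{1..2}) : mdeg m = (m ix + m iy)%N.
Proof.
rewrite mdegE !big_ord_recr big_ord0 /=.
have -> : widen_ord (leqnSn 1) ord_max = ix by apply: val_inj.
by have -> : (ord_max : 'I_2) = iy by apply: val_inj.
Qed.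

Lemma cut_homog d h m :
  (cut (homogenize d h))@_m = h@_m * ((d <= mdeg m)%N)%:R.
Proof.
rewrite cutE /homogenize raddf_sum /=.
rewrite (eq_bigr (fun m' => (h@_m' * ((d <= mdeg m)%N)%:R) * (m' == m)%:R)); last first.
  move=> m' _; rewrite mcoeffZ mono3 mcoeffX ext_mn3 mn3_eq mnm2_eq.
  case: (m' =P m) => [->|ne]; first by rewrite !eqxx /= subn_eq0 mulr1.
  have F : (m' ix == m ix) && (m' iy == m iy) = false by rewrite -mnm2_eq; apply/eqP.
  by move: F; case: (m' ix == m ix); case: (m' iy == m iy) => //= _; rewrite !mulr0.
rewrite sum_indic ?msupp_uniq //; case: ifP => // /negbT.
by rewrite mcoeff_msupp negbK => /eqP ->; rewrite mul0r.
Qed.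

Lemma ext_addU1 m : ext (m + U_(ix))%MM = (ext m + U_(iu))%MM.
Proof.
by apply/mnmP => -[[|[|[|i]]] Hi]; rewrite !mnmE //= ?addn0 ?addn1.
Qed.

Lemma ext_addU2 m : ext (m + U_(iy))%MM = (ext m + U_(iv))%MM.
Proof.
by apply/mnmP => -[[|[|[|i]]] Hi]; rewrite !mnmE //= ?addn0 ?addn1.
Qed.

Lemma cut_du P : cut (mderiv iu P) = mderiv ix (cut P).
Proof.
by apply/mpolyP => m; rewrite cutE !mcoeff_deriv cutE ext_addU1 mnmE.
Qed.

Lemma cut_dv P : cut (mderiv iv P) = mderiv iy (cut P).
Proof.
by apply/mpolyP => m; rewrite cutE !mcoeff_deriv cutE ext_addU2 mnmE.
Qed.

Lemma cut_is_mult : multiplicative cut.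
Proof. exact: comp_mpoly_is_multiplicative. Qed.

Lemma msize_leP h k : (forall m, h@_m != 0 -> (mdeg m < k)%N) -> (msize h <= k)%N.
Proof.
move=> H; rewrite msizeE; apply/bigmax_leqP_seq => m mh _.
by apply: H; rewrite -mcoeff_msupp.
Qed.

Lemma coef_out h m : (msize h <= mdeg m)%N -> h@_m = 0.
Proof. by move/msize_mdeg_ge/memN_msupp_eq0. Qed.

Lemma msize_mderiv i h : (msize (mderiv i h) <= (msize h).-1)%N.
Proof.
apply: msize_leP => m; rewrite mcoeff_deriv => nz.
have : h@_(m + U_(i))%MM != 0.
  by apply: contraNneq nz => ->; rewrite mul0rn.
rewrite -mcoeff_msupp => /msize_mdeg_lt; rewrite mdegD mdeg1 addn1.
by case: (msize h).
Qed.

Lemma msizeD2 h1 h2 k : (msize h1 <= k)%N -> (msize h2 <= k)%N -> (msize (h1 + h2) <= k)%N.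
Proof.
move=> a b; apply: leq_trans (mmeasureD_le _ _ _) _.
by rewrite geq_max a b.
Qed.

Lemma msizeN2 h k : (msize h <= k)%N -> (msize (- h) <= k)%N.
Proof. by rewrite mmeasureN. Qed.

Lemma msizeM2 h1 h2 a b : (msize h1 <= a)%N -> (msize h2 <= b)%N ->
  (msize (h1 * h2) <= (a + b).-1)%N.
Proof.
have [->|nz1] := eqVneq h1 0; first by rewrite mul0r msize0.
have [->|nz2] := eqVneq h2 0; first by rewrite mulr0 msize0.
move=> a1 b1; rewrite msizeM //.
have := leq_add a1 b1; case: (msize h1 + msize h2)%N => //= k.
by case: (a + b)%N.
Qed.

Lemma hpart_coef d h m : (hpart d h)@_m = h@_m * (mdeg m == d)%:R.
Proof.
rewrite /hpart big_mkcond raddf_sum /=.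
rewrite (eq_bigr (fun m' => (h@_m' * (mdeg m' == d)%:R) * (m' == m)%:R)); last first.
  move=> m' _; case: eqP => _; rewrite ?mcoeffZ ?mcoeffX ?mcoeff0 ?mulr1 ?mulr0 ?mul0r //.
rewrite sum_indic ?msupp_uniq //; case: ifP => // /negbT.
by rewrite mcoeff_msupp negbK => /eqP ->; rewrite mul0r.
Qed.

Lemma hpart_homog d h : hpart d h \is d.-homog.
Proof.
apply/dhomogP => m; rewrite mcoeff_msupp hpart_coef.
by case: (mdeg m =P d) => // _ /=; rewrite mulr0 eqxx.
Qed.

Lemma mderiv_homog d i h : h \is d.-homog -> mderiv i h \is d.-1.-homog.
Proof.
move/dhomogP => H; apply/dhomogP => m; rewrite mcoeff_msupp mcoeff_deriv => nz.
have : h@_(m + U_(i))%MM != 0.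
  by apply: contraNneq nz => ->; rewrite mul0rn.
rewrite -mcoeff_msupp => /H e; have e2 : mdeg (m + U_(i))%MM = d := e.
by move: e2; rewrite mdegD mdeg1 addn1 => <-.
Qed.

Lemma msize_tdeg f : (msize f <= (tdeg f).+1)%N.
Proof. by rewrite /tdeg; case: (msize f). Qed.

Lemma cut_bigF f : cut (bigF f) = hpart (tdeg f) f.
Proof.
apply/mpolyP => m; rewrite /bigF cut_homog hpart_coef.
case: (ltngtP (tdeg f) (mdeg m)) => [lt|lt|e].
- by rewrite coef_out ?mul0r // (leq_trans (msize_tdeg f)).
- done.
- done.
Qed.

Lemma cut_hess f : (3 <= tdeg f)%N -> cut (Hf f) = hessian (hpart (tdeg f) f).
Proof.
move=> n3; set n := tdeg f; set g := hpart n f.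
have szf := msize_tdeg f.
set r := f - g.
have szr : (msize r <= n)%N.
  apply: msize_leP => m; rewrite mcoeffB hpart_coef.
  case: (ltngtP (mdeg m) n) => [//|lt|e].
    by rewrite coef_out ?mul0r ?subrr ?eqxx // (leq_trans szf).
  by rewrite mulr1 subrr eqxx.
have szg : (msize g <= n.+1)%N.
  apply: msize_leP => m; rewrite hpart_coef.
  by case: (mdeg m =P n) => [->//|_]; rewrite mulr0 eqxx.
have hg : g \is n.-homog by apply: hpart_homog.
have d2 i j h k : (msize h <= k)%N -> (msize (mderiv i (mderiv j h)) <= k.-2)%N.
  move=> hk; apply: leq_trans (msize_mderiv _ _) _.
  have := leq_trans (msize_mderiv j h) (leq_pred _).
  move: (msize_mderiv j h); case: (msize (mderiv j h)) => [|s] //=.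
  move=> e _; rewrite -ltnS; apply: leq_trans e _. 
  by move: hk; case: (msize h) => [|[|t]] //=; case: k => [|[|[|k]]].
have hh : hessian g \is (2 * n - 4)%N.-homog.
  have h2 i j : mderiv i (mderiv j g) \is n.-2.-homog.
    by apply: mderiv_homog; apply: mderiv_homog.
  have -> : (2 * n - 4 = n.-2 + n.-2)%N by lia.
  rewrite /hessian; apply: rpredB; first by apply: dhomogM.
  by rewrite expr2; apply: dhomogM.
have fE : f = g + r by rewrite /r addrC subrK.
clearbody r.
set E := hessian f - hessian g.
have szE : (msize E <= 2 * n - 4)%N.
  rewrite /E fE /hessian !mderivD.
  set A := mderiv ix (mderiv ix g); set a := mderiv ix (mderiv ix r).
  set B := mderiv ix (mderiv iy g); set b := mderiv ix (mderiv iy r).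
  set C := mderiv iy (mderiv iy g); set c := mderiv iy (mderiv iy r).
  have -> : (A + a) * (C + c) - (B + b) ^+ 2 - (A * C - B ^+ 2) =
     A * c + a * C + a * c - B * b - B * b - b * b by ring.
  have sA : (msize A <= n.-1)%N := d2 _ _ _ _ szg.
  have sB : (msize B <= n.-1)%N := d2 _ _ _ _ szg.
  have sC : (msize C <= n.-1)%N := d2 _ _ _ _ szg.
  have sa : (msize a <= n.-2)%N := d2 _ _ _ _ szr.
  have sb : (msize b <= n.-2)%N := d2 _ _ _ _ szr.
  have sc : (msize c <= n.-2)%N := d2 _ _ _ _ szr.
  have k1 : ((n.-1 + n.-2).-1 <= 2 * n - 4)%N by lia.
  have k2 : ((n.-2 + n.-1).-1 <= 2 * n - 4)%N by lia.
  have k3 : ((n.-2 + n.-2).-1 <= 2 * n - 4)%N by lia.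
  repeat apply: msizeD2 || apply: msizeN2.
  - exact: leq_trans (msizeM2 sA sc) k1.
  - exact: leq_trans (msizeM2 sa sC) k2.
  - exact: leq_trans (msizeM2 sa sc) k3.
  - exact: leq_trans (msizeM2 sB sb) k1.
  - exact: leq_trans (msizeM2 sB sb) k1.
  - exact: leq_trans (msizeM2 sb sb) k3.
apply/mpolyP => m; rewrite /Hf cut_homog.
have -> : hessian f = hessian g + E by rewrite /E addrC subrK.
case: leqP => hm.
  by rewrite mulr1 mcoeffD (coef_out (leq_trans szE hm)) addr0.
rewrite mulr0 (dhomog_nemf_coeff hh) //.
by apply/eqP => e; have e2 : mdeg m = (2 * n - 4)%N := e; rewrite e2 ltnn in hm.
Qed.

Definition eul h : {mpoly R[2]} := 'X_ix * mderiv ix h + 'X_iy * mderiv iy h.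

Lemma eulX m : eul 'X_[m] = (mdeg m)%:R *: 'X_[m].
Proof.
have H i : 'X_i * mderiv i 'X_[m] = (m i)%:R *: 'X_[m] :> {mpoly R[2]}.
  rewrite mderivX -scalerAr -mpolyXD.
  case: (eqVneq (m i) 0%N) => [->|nz]; first by rewrite !scale0r.
  by rewrite addmC submK // lep1mP.
by rewrite /eul !H -scalerDl -natrD mdeg2.
Qed.

Lemma eulD p q : eul (p + q) = eul p + eul q.
Proof. by rewrite /eul !mderivD !mulrDr addrACA. Qed.

Lemma eulZ c p : eul (c *: p) = c *: eul p.
Proof. by rewrite /eul !mderivZ -!scalerAr scalerDr. Qed.

Lemma eul_sum (s : seq 'X_{1..2}) (F : 'X_{1..2} -> R) :
  eul (\sum_(m <- s) F m *: 'X_[m]) = \sum_(m <- s) F m *: eul 'X_[m].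
Proof.
elim: s => [|m s IH]; first by rewrite !big_nil /eul !mderiv0 !mulr0 addr0.
by rewrite !big_cons eulD eulZ IH.
Qed.

Lemma euler d h : h \is d.-homog -> eul h = d%:R *: h.
Proof.
move/dhomogP => H.
rewrite {1}[h]mpolyE eul_sum [in RHS](mpolyE h) scaler_sumr big_seq [in RHS]big_seq.
apply: eq_bigr => m /H e; have e2 : mdeg m = d := e.
by rewrite eulX e2 !scalerA mulrC.
Qed.


Lemma ev_mono u v m : 'X_[m].@[pt u v] = u ^+ (m ix) * v ^+ (m iy).
Proof.
rewrite mevalX !big_ord_recr big_ord0 /= mul1r.
have -> : widen_ord (leqnSn 1) ord_max = ix by apply: val_inj.
by have -> : (ord_max : 'I_2) = iy by apply: val_inj.
Qed.

Lemma ev_sum u v h : h.@[pt u v] = \sum_(m <- msupp h) h@_m * (u ^+ (m ix) * v ^+ (m iy)).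
Proof.
rewrite {1}[h]mpolyE rmorph_sum /=; apply: eq_bigr => m _.
by rewrite mevalZ ev_mono.
Qed.

Lemma ev_dx u v h : (mderiv ix h).@[pt u v] =
  \sum_(m <- msupp h) h@_m * ((m ix)%:R * u ^+ (m ix).-1 * v ^+ (m iy)).
Proof.
rewrite /mderiv rmorph_sum /=; apply: eq_bigr => m _.
rewrite mevalZ ev_mono !mnmBE !mnm1E /= subn1 subn0; ring.
Qed.

Lemma ev_dy u v h : (mderiv iy h).@[pt u v] =
  \sum_(m <- msupp h) h@_m * ((m iy)%:R * u ^+ (m ix) * v ^+ (m iy).-1).
Proof.
rewrite /mderiv rmorph_sum /=; apply: eq_bigr => m _.
rewrite mevalZ ev_mono !mnmBE !mnm1E /= subn1 subn0; ring.
Qed.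

Lemma Xmono m : 'X_[m] = 'X_ix ^+ (m ix) * 'X_iy ^+ (m iy) :> {mpoly R[2]}.
Proof.
rewrite [LHS]mpolyXE_id !big_ord_recr big_ord0 /= mul1r.
have -> : widen_ord (leqnSn 1) ord_max = ix by apply: val_inj.
by have -> : (ord_max : 'I_2) = iy by apply: val_inj.
Qed.

Lemma factor_sq d h (u v : R) : h \is d.-homog -> (0 < d)%N -> u ^+ 2 + v ^+ 2 = 1 ->
  h.@[pt u v] = 0 ->
  v * (mderiv ix h).@[pt u v] - u * (mderiv iy h).@[pt u v] = 0 ->
  exists W, h = (v%:MP * 'X_ix - u%:MP * 'X_iy) ^+ 2 * W.
Proof.
move=> /dhomogP Hh d0 uv h0 l0.
set uP : {mpoly R[2]} := u%:MP; set vP : {mpoly R[2]} := v%:MP.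
set l := vP * 'X_ix - uP * 'X_iy.
set s := uP * 'X_ix + vP * 'X_iy.
have huv : uP ^+ 2 + vP ^+ 2 = 1 by rewrite /uP /vP -!rmorphXn -rmorphD uv rmorph1.
have eX : 'X_ix = uP * s + vP * l.
  transitivity ((uP ^+ 2 + vP ^+ 2) * 'X_ix); first by rewrite huv mul1r.
  by rewrite /s /l; ring.
have eY : 'X_iy = vP * s + (- uP) * l.
  transitivity ((uP ^+ 2 + vP ^+ 2) * 'X_iy); first by rewrite huv mul1r.
  by rewrite /s /l; ring.
have key : cg l h
  (\sum_(m <- msupp h) (h@_m)%:MP * (uP ^+ (m ix) * vP ^+ (m iy) * s ^+ (m ix + m iy) +
      ((m ix)%:R * uP ^+ (m ix).-1 * vP ^+ (m iy).+1 - (m iy)%:R * uP ^+ (m ix).+1 * vP ^+ (m iy).-1)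
      * s ^+ (m ix + m iy).-1 * l)).
  rewrite {1}[h]mpolyE big_seq [X in cg _ _ X]big_seq.
  apply: cg_sum_cond => m mh.
  rewrite -mul_mpolyC; apply: cgM; first exact: cg_refl.
  rewrite Xmono eX eY; apply: mono.
  by rewrite -mdeg2 (Hh _ mh).
have R1 : \sum_(m <- msupp h) (h@_m)%:MP * (uP ^+ (m ix) * vP ^+ (m iy)) =
    (h.@[pt u v])%:MP.
  rewrite ev_sum rmorph_sum; apply: eq_bigr => m _.
  by rewrite !rmorphM !rmorphXn.
have R2 : \sum_(m <- msupp h) (h@_m)%:MP *
    ((m ix)%:R * uP ^+ (m ix).-1 * vP ^+ (m iy).+1 - (m iy)%:R * uP ^+ (m ix).+1 * vP ^+ (m iy).-1)
    = (v * (mderiv ix h).@[pt u v] - u * (mderiv iy h).@[pt u v])%:MP.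
  rewrite ev_dx ev_dy !mulr_sumr -sumrB rmorph_sum; apply: eq_bigr => m _.
  rewrite rmorphB !rmorphM !rmorphXn !rmorph_nat -/uP -/vP !exprS; ring.
case: key => W eW; exists W.
rewrite eW -[X in _ = X]add0r; congr (_ + _).
rewrite big_seq.
rewrite (eq_bigr (fun m => ((h@_m)%:MP * (uP ^+ (m ix) * vP ^+ (m iy))) * s ^+ d +
   ((h@_m)%:MP * ((m ix)%:R * uP ^+ (m ix).-1 * vP ^+ (m iy).+1 - (m iy)%:R * uP ^+ (m ix).+1 * vP ^+ (m iy).-1)) * (s ^+ d.-1 * l))); last first.
  move=> m mh; have e : mdeg m = d := Hh _ mh.
  rewrite mdeg2 in e; rewrite e; ring.
rewrite big_split /= -!mulr_suml -!big_seq R1 R2 h0 l0 !rmorph0.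
by rewrite !mul0r addr0.
Qed.



Lemma ev3_d2 (f : {mpoly R[2]}) (u v : R) :
  (ev3 (Fuu f) u v 0 = (mderiv ix (mderiv ix (hpart (tdeg f) f))).@[pt u v]) *
  (ev3 (Fuv f) u v 0 = (mderiv ix (mderiv iy (hpart (tdeg f) f))).@[pt u v]) *
  (ev3 (Fvv f) u v 0 = (mderiv iy (mderiv iy (hpart (tdeg f) f))).@[pt u v]).
Proof.
by rewrite !ev3_cut /Fuu /Fuv /Fvv !cut_du !cut_dv cut_bigF.
Qed.

Lemma ev_eul (u v : R) h : (eul h).@[pt u v] = u * (mderiv ix h).@[pt u v] + v * (mderiv iy h).@[pt u v].
Proof. by rewrite /eul rmorphD !rmorphM /= !mevalXU. Qed.

Lemma msize_lin (u v : R) : u ^+ 2 + v ^+ 2 = 1 ->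
  (1 < msize (v%:MP * 'X_ix - u%:MP * 'X_iy : {mpoly R[2]}))%N.
Proof.
move=> uv; rewrite ltnNge; apply/negP => /msize1_polyC e.
have c1 := congr1 (mcoeff U_(ix)%MM) e.
have c2 := congr1 (mcoeff U_(iy)%MM) e.
rewrite !mcoeffB !mcoeffCM !mcoeffC !mcoeffX in c1 c2.
have n1 : (U_(ix)%MM == 0%MM :> 'X_{1..2}) = false.
  by apply/negbTE/eqP => /(congr1 (fun m : 'X_{1..2} => m ix)); rewrite !mnmE.
have n2 : (U_(iy)%MM == 0%MM :> 'X_{1..2}) = false.
  by apply/negbTE/eqP => /(congr1 (fun m : 'X_{1..2} => m iy)); rewrite !mnmE.
have n3 : (U_(ix)%MM == U_(iy)%MM :> 'X_{1..2}) = false.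
  by apply/negbTE/eqP => /(congr1 (fun m : 'X_{1..2} => m ix)); rewrite !mnmE.
rewrite !eqxx eq_sym n3 n1 n2 /= in c1 c2.
have : v = 0 by move: c1; rewrite !mulr0 !mulr1 subr0.
have : u = 0 by move: c2; rewrite !mulr0 !mulr1 sub0r => /eqP; rewrite oppr_eq0 => /eqP.
move=> u0 v0; move: uv; rewrite u0 v0 expr0n /= addr0 => /eqP.
by rewrite eq_sym oner_eq0.
Qed.

End H.

Unset Implicit Arguments.
Set Strict Implicit.

Theorem theorem3 (R : rcfType) (f : {mpoly R[2]}) :
  (3 <= tdeg f)%N ->
  (forall u v w : R, on_sphere u v w -> w = 0 ->
     (flat_pt f u v w <-> singular_at_infinity f u v w)) /\
  (forall u0 v0 : R, singular_at_infinity f u0 v0 0 ->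
     no_repeated_factors (hpart (tdeg f) f) ->
     ev3 (Hf f) u0 v0 0 < 0).
Proof.
move=> n3.
have Qww1 u v : Qform f u v 0 0 0 1 = Q_ww f u v 0.
  by rewrite /Qform; ring.
split.
  move=> u v w sph w0; subst w; split.
    move=> [_ [_ [_ [_ [_ Hww]]]]]; split; last by []. split; first exact: sph. move=> a b c _.
    by rewrite /Qform /Q_uu /Q_uv /Q_vv /Q_uw /Q_vw Hww; ring.
  move=> [[_ H] _]; have := H 0 0 1; rewrite Qww1 => Hww.
  have {}Hww := Hww ltac:(ring).
  by rewrite /flat_pt /Q_uu /Q_uv /Q_vv /Q_uw /Q_vw Hww; do !split; ring.
move=> u v [[sph H] _] nrf.
have Hww : Q_ww f u v 0 = 0 by rewrite -Qww1; apply: H; ring.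
have uv : u ^+ 2 + v ^+ 2 = 1 by move: sph; rewrite /on_sphere expr0n addr0.
set n := tdeg f in n3 nrf *; set g := hpart n f in nrf *.
have hg : g \is n.-homog by apply: hpart_homog.
have hgx : mderiv ix g \is n.-1.-homog by apply: mderiv_homog.
have hgy : mderiv iy g \is n.-1.-homog by apply: mderiv_homog.
set p := pt u v.
set A := (mderiv ix (mderiv ix g)).@[p].
set B := (mderiv ix (mderiv iy g)).@[p].
set C := (mderiv iy (mderiv iy g)).@[p].
set a := (mderiv ix g).@[p].
set b := (mderiv iy g).@[p].
set G := g.@[p].
have S0 : u ^+ 2 * A + 2%:R * (u * v * B) + v ^+ 2 * C = 0.
  move: Hww; rewrite /Q_ww /polS /ev3 !rmorphD !rmorphM /= mevalZ !rmorphM /= !mevalXU /=.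
  have := ev3_d2 f u v; rewrite /ev3 => -[[-> ->] ->].
  rewrite -/n -/g -/p -/A -/B -/C => e; rewrite -[RHS]e; ring.
have E0 : u * a + v * b = n%:R * G.
  by rewrite -ev_eul (euler hg) mevalZ.
have E1 : u * A + v * B = n.-1%:R * a.
  by rewrite /B mderiv_comm -ev_eul (euler hgx) mevalZ.
have E2 : u * B + v * C = n.-1%:R * b.
  by rewrite -ev_eul (euler hgy) mevalZ.
have nz1 : (n.-1)%:R != 0 :> R by rewrite pnatr_eq0; case: (n) n3 => [|[|]].
have nz0 : n%:R != 0 :> R by rewrite pnatr_eq0; case: (n) n3.
have G0 : G = 0.
  have : n.-1%:R * (n%:R * G) = 0.
    rewrite -E0; transitivity (u * (n.-1%:R * a) + v * (n.-1%:R * b)); first ring.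
    by rewrite -E1 -E2 -S0; ring.
  by move/eqP; rewrite !mulf_eq0 (negbTE nz1) (negbTE nz0) /= => /eqP.
have Hid : (A * C - B ^+ 2) * (u ^+ 2 + v ^+ 2) ^+ 2 =
  (u ^+ 2 * A + 2%:R * (u * v * B) + v ^+ 2 * C) * (v ^+ 2 * A - 2%:R * (u * v * B) + u ^+ 2 * C)
  - (- v * (u * A + v * B) + u * (u * B + v * C)) ^+ 2 by ring.
rewrite uv S0 E1 E2 expr1n mulr1 mul0r sub0r in Hid.
have -> : ev3 (Hf f) u v 0 = A * C - B ^+ 2.
  rewrite ev3_cut cut_hess // -/n -/g /hessian rmorphB rmorphM rmorphXn /=.
  by rewrite -/p -/A -/B -/C.
rewrite Hid oppr_lt0 lt0r sqr_ge0 andbT sqrf_eq0.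
have -> : - v * (n.-1%:R * a) + u * (n.-1%:R * b) = n.-1%:R * (u * b - v * a) by ring.
rewrite mulf_eq0 negb_or nz1 /=; apply/negP => /eqP lam0.
have n0 : (0 < n)%N by case: (n) n3.
have [W eW] := factor_sq hg n0 uv G0 ltac:(by rewrite -/p -/a -/b; apply/eqP; rewrite -oppr_eq0 opprB; apply/eqP).
have := nrf _ _ (etrans eW (congr1 (fun x => x * W) (expr2 _))).
by rewrite leqNgt msize_lin.
Qed.
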